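(* Let $0<x_0\le1$ and $\epsilon\ge0$. Consider the eigenvalue problem $$L_0\Psi=\Phi,\qquad \Phi'+\frac{\epsilon}{1-x^2}\Phi=\mu\,\Psi',\qquad -x_0<x<x_0,$$ for $\Psi$ in the space $X_0$ if $x_0<1$ and in $X$ if $x_0=1$. Then every eigenvalue $\mu$ other than the trivial eigenvalue $\mu=0$ (whose eigenfunctions are the constants) is real and strictly negative.
   Context: $L_0=\frac{d}{dx}\left[(1-x^2)\frac{d}{dx}\right]$. ${\cal H}_0([-x_0,x_0])$ is the space of functions with $\int_{-x_0}^{x_0}(1-x^2)|\Psi'(x)|^2dx<\infty$. For $0<x_0<1$, $X_0=\{\Psi\in{\cal H}_0([-x_0,x_0]):\ \Psi'(\pm x_0)=0\}$; for $x_0=1$, $X=\{\Psi\in{\cal H}_0([-1,1]):\ \lim_{x\to\pm1}(1-x^2)\Psi'(x)=0\}$. $\Psi$ is determined up to an additive constant. A number $\mu\in\mathbb{C}$ is an eigenvalue if there is a nonzero $\Psi$ in the relevant space solving the system classically on $(-x_0,x_0)$ with $\Phi=L_0\Psi$. (This describes symmetry-preserving perturbations of a stationary flow on a sphere, $\epsilon$ being the Reynolds number.) *)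

(* Defs.v *)
From Stdlib Require Import Reals.
From Coquelicot Require Import Coquelicot.
Open Scope R_scope.

(* Psi : R -> C is a (nontrivial) eigenfunction of the problem
     L_0 Psi = Phi,   Phi' + eps/(1-x^2) Phi = mu Psi',   -x0 < x < x0,
   with L_0 = d/dx[(1-x^2) d/dx], in the space X_0 (x0 < 1) or X (x0 = 1).
   dPsi, Phi, dPhi are the classical derivatives Psi', Phi = ((1-x^2)Psi')',
   Phi' on the open interval. *)
Definition eigenfunction (x0 eps : R) (mu : C) (Psi : R -> C) : Prop :=
  exists dPsi Phi dPhi : R -> C,
    (forall x : R, - x0 < x < x0 ->
        is_derive Psi x (dPsi x)
     /\ is_derive (fun y : R => (RtoC (1 - y ^ 2) * dPsi y)%C) x (Phi x)
     /\ is_derive Phi x (dPhi x)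
     /\ (dPhi x + RtoC (eps / (1 - x ^ 2)) * Phi x = mu * dPsi x)%C)
    (* Psi in H_0([-x0,x0]) : int_{-x0}^{x0} (1-x^2) |Psi'|^2 dx < oo *)
    /\ ex_RInt_gen (fun x : R => (1 - x ^ 2) * (Cmod (dPsi x)) ^ 2)
                   (at_right (- x0)) (at_left x0)
    (* boundary conditions defining X_0 : Psi'(+-x0) = 0 *)
    /\ (x0 < 1 ->
          filterlim dPsi (at_right (- x0)) (locally (RtoC 0))
       /\ filterlim dPsi (at_left x0) (locally (RtoC 0)))
    (* boundary conditions defining X : lim_{x -> +-1} (1-x^2) Psi'(x) = 0 *)
    /\ (x0 = 1 ->
          filterlim (fun x : R => (RtoC (1 - x ^ 2) * dPsi x)%C)
                    (at_right (- 1)) (locally (RtoC 0))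
       /\ filterlim (fun x : R => (RtoC (1 - x ^ 2) * dPsi x)%C)
                    (at_left 1) (locally (RtoC 0)))
    /\ ~ (exists c : C, forall x : R, - x0 < x < x0 -> Psi x = c).

Definition is_eigenvalue (x0 eps : R) (mu : C) : Prop :=
  exists Psi : R -> C, eigenfunction x0 eps mu Psi.

(* Main.v *)
Require Import Defs.
From Stdlib Require Import Reals Lra Psatz.
From Coquelicot Require Import Coquelicot.
Open Scope R_scope.

Definition lim_left0 (f : R -> R) (a : R) :=
  forall e, 0 < e -> exists d, 0 < d /\ forall x, a - d < x < a -> Rabs (f x) < e.
Definition lim_right0 (f : R -> R) (a : R) :=
  forall e, 0 < e -> exists d, 0 < d /\ forall x, a < x < a + d -> Rabs (f x) < e.

Lemma ball_C_fst (z : C) e : ball (RtoC 0) e z -> Rabs (fst z) < e /\ Rabs (snd z) < e.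
Proof.
  intros [H1 H2]. change (Rabs (fst z - 0) < e) in H1. change (Rabs (snd z - 0) < e) in H2.
  rewrite Rminus_0_r in H1, H2. auto.
Qed.

Lemma lim_C_left (f : R -> C) a : filterlim f (at_left a) (locally (RtoC 0)) ->
  lim_left0 (fun x => fst (f x)) a /\ lim_left0 (fun x => snd (f x)) a.
Proof.
  intros H. split; intros e He;
  (assert (Hb : locally (RtoC 0) (ball (RtoC 0) (mkposreal e He))) by apply locally_ball);
  specialize (H _ Hb); destruct H as [d Hd]; exists d; split; try apply cond_pos;
  intros x Hx; (assert (Hx' : ball a d x) by
    (change (Rabs (x - a) < d); apply Rabs_def1; lra));
  destruct (ball_C_fst _ _ (Hd x Hx' (proj2 Hx))); auto.
Qed.

Lemma lim_C_right (f : R -> C) a : filterlim f (at_right a) (locally (RtoC 0)) ->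
  lim_right0 (fun x => fst (f x)) a /\ lim_right0 (fun x => snd (f x)) a.
Proof.
  intros H. split; intros e He;
  (assert (Hb : locally (RtoC 0) (ball (RtoC 0) (mkposreal e He))) by apply locally_ball);
  specialize (H _ Hb); destruct H as [d Hd]; exists d; split; try apply cond_pos;
  intros x Hx; (assert (Hx' : ball a d x) by
    (change (Rabs (x - a) < d); apply Rabs_def1; lra));
  destruct (ball_C_fst _ _ (Hd x Hx' (proj1 Hx))); auto.
Qed.

Lemma D_fst (f : R -> C) x l : is_derive f x l -> is_derive (fun y => fst (f y)) x (fst l).
Proof.
  intros H. unfold is_derive in *.
  eapply filterdiff_ext_lin.
  apply (filterdiff_comp _ _ _ _ H (filterdiff_linear _ is_linear_fst)).
  intros y. reflexivity.
Qed.
Lemma D_snd (f : R -> C) x l : is_derive f x l -> is_derive (fun y => snd (f y)) x (snd l).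
Proof.
  intros H. unfold is_derive in *.
  eapply filterdiff_ext_lin.
  apply (filterdiff_comp _ _ _ _ H (filterdiff_linear _ is_linear_snd)).
  intros y. reflexivity.
Qed.

Lemma D_val (f : R -> R) (x l l' : R) : is_derive f x l -> @eq R l l' -> is_derive f x l'.
Proof. intros H ->; exact H. Qed.
Lemma D_ext (f g : R -> R) x l : (forall t, f t = g t) -> is_derive f x l -> is_derive g x l.
Proof. intros E H. apply (is_derive_ext f g); auto. Qed.
Lemma D_mult (f g : R -> R) x df dg : is_derive f x df -> is_derive g x dg ->
  is_derive (fun t => f t * g t) x (df * g x + f x * dg).
Proof. intros Hf Hg. apply (is_derive_mult f g x df dg Hf Hg). intros; apply Rmult_comm. Qed.
Lemma D_plus (f g : R -> R) x df dg : is_derive f x df -> is_derive g x dg ->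
  is_derive (fun t => f t + g t) x (df + dg).
Proof. intros Hf Hg. apply (is_derive_plus f g x df dg Hf Hg). Qed.
Lemma D_minus (f g : R -> R) x df dg : is_derive f x df -> is_derive g x dg ->
  is_derive (fun t => f t - g t) x (df - dg).
Proof. intros Hf Hg. apply (is_derive_minus f g x df dg Hf Hg). Qed.
Lemma D_const c x : is_derive (fun _ : R => c) x 0.
Proof. apply (is_derive_const (K:=R_AbsRing) (V:=R_NormedModule) c x). Qed.
Lemma D_id x : is_derive (fun t : R => t) x 1.
Proof. apply (is_derive_id (K:=R_AbsRing) x). Qed.
Lemma D_scal k (f : R -> R) x df : is_derive f x df -> is_derive (fun t => k * f t) x (k * df).
Proof. apply is_derive_scal. Qed.
Lemma D_inv (f : R -> R) x df : is_derive f x df -> f x <> 0 ->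
  is_derive (fun t => / f t) x (- df / (f x) ^ 2).
Proof. apply is_derive_inv. Qed.
Lemma D_exp_lin k x : is_derive (fun t => exp (k * t)) x (k * exp (k * x)).
Proof. auto_derive; auto. ring. Qed.

Lemma D_cont (f : R -> R) x l : is_derive f x l -> continuity_pt f x.
Proof.
  intros H. apply continuity_pt_filterlim. apply (ex_derive_continuous (K:=R_AbsRing) (V:=R_NormedModule)). exists l; exact H.
Qed.


Lemma mono_le (f df : R -> R) lo hi :
  (forall x, lo < x < hi -> is_derive f x (df x)) ->
  (forall x, lo < x < hi -> 0 <= df x) ->
  forall x y, lo < x -> x <= y -> y < hi -> f x <= f y.
Proof.
  intros Hd Hpos x y Hx Hxy Hy.
  destruct (MVT_gen f x y df) as [c [Hc Heq]].
  - intros z Hz. apply Hd. rewrite Rmin_left in Hz by lra. rewrite Rmax_right in Hz by lra. lra.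
  - intros z Hz. rewrite Rmin_left in Hz by lra. rewrite Rmax_right in Hz by lra.
    apply (D_cont f z (df z)). apply Hd. lra.
  - rewrite Rmin_left in Hc by lra. rewrite Rmax_right in Hc by lra.
    assert (0 <= df c) by (apply Hpos; lra). nra.
Qed.

Lemma compare_le (v dv G dG : R -> R) lo hi :
  (forall x, lo < x < hi -> is_derive v x (dv x)) ->
  (forall x, lo < x < hi -> is_derive G x (dG x)) ->
  (forall x, lo < x < hi -> Rabs (dv x) <= dG x) ->
  forall x y, lo < x -> x <= y -> y < hi -> Rabs (v y - v x) <= G y - G x.
Proof.
  intros Hv HG Hb x y Hx Hxy Hy.
  pose proof (mono_le (fun t => G t - v t) (fun t => dG t - dv t) lo hi) as H1.
  pose proof (mono_le (fun t => G t + v t) (fun t => dG t + dv t) lo hi) as H2.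
  simpl in H1, H2.
  assert (G x - v x <= G y - v y).
  { apply H1; auto.
    - intros z Hz. apply D_minus; auto.
    - intros z Hz. specialize (Hb z Hz). apply Rabs_le_between in Hb. lra. }
  assert (G x + v x <= G y + v y).
  { apply H2; auto.
    - intros z Hz. apply D_plus; auto.
    - intros z Hz. specialize (Hb z Hz). apply Rabs_le_between in Hb. lra. } apply Rabs_le. lra.
Qed.

Lemma grow_le (f df : R -> R) K lo hi :
  (forall x, lo < x < hi -> is_derive f x (df x)) ->
  (forall x, lo < x < hi -> K * f x <= df x) ->
  forall x y, lo < x -> x <= y -> y < hi -> f x * exp (- K * x) <= f y * exp (- K * y).
Proof.
  intros Hd Hb x y Hx Hxy Hy.
  pose proof (mono_le (fun t => f t * exp (- K * t)) (fun t => df t * exp (-K*t) + f t * (- K * exp (- K * t))) lo hi) as H.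
  simpl in H. apply H; auto.
  - intros z Hz. apply (D_mult f (fun t => exp (-K*t))); auto. apply (D_exp_lin (-K)).
  - intros z Hz. specialize (Hb z Hz). pose proof (exp_pos (- K * z)). nra.
Qed.

Lemma deriv_zero_of_zero (T : R -> R) lo hi x l :
  lo < x < hi -> (forall y, lo < y < hi -> T y = 0) -> is_derive T x l -> l = 0.
Proof.
  intros Hx HT Hd.
  assert (H : is_derive (fun _ : R => 0) x l).
  { apply (is_derive_ext_loc T (fun _ => 0) x l); auto.
    apply (locally_interval _ x lo hi); simpl; try lra. intros y H1 H2. apply HT. lra. }
  pose proof (D_const 0 x) as H0.
  apply is_derive_unique in H. apply is_derive_unique in H0. congruence.
Qed.

Lemma mono_zero (T dT : R -> R) lo hi :
  lo < hi ->
  (forall x, lo < x < hi -> is_derive T x (dT x)) ->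
  (forall x, lo < x < hi -> 0 <= dT x) ->
  lim_right0 T lo -> lim_left0 T hi ->
  forall x, lo < x < hi -> T x = 0.
Proof.
  intros Hlh Hd Hp Hl Hr x Hx.
  destruct (Rle_or_lt (T x) 0) as [Hle|Hgt].
  - destruct (Rle_or_lt 0 (T x)) as [Hge|Hlt]; [lra|].
    destruct (Hl (- T x)) as [d [Hd0 Hdd]]; [lra|].
    set (y' := Rmin (lo + d / 2) ((lo + x)/2)).
    assert (Hy : lo < y' < lo + d) by (unfold y', Rmin; destruct Rle_dec; lra).
    assert (Hy2 : y' <= x) by (unfold y', Rmin; destruct Rle_dec; lra).
    specialize (Hdd y' Hy).
    assert (T y' <= T x) by (apply (mono_le T dT lo hi); auto; lra).
    apply Rabs_lt_between in Hdd. lra.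
  - destruct (Hr (T x)) as [d [Hd0 Hdd]]; [lra|].
    set (y' := Rmax (hi - d / 2) ((hi + x)/2)).
    assert (Hy : hi - d < y' < hi) by (unfold y', Rmax; destruct Rle_dec; lra).
    assert (Hy2 : x <= y') by (unfold y', Rmax; destruct Rle_dec; lra).
    specialize (Hdd y' Hy).
    assert (T x <= T y') by (apply (mono_le T dT lo hi); auto; lra).
    apply Rabs_lt_between in Hdd. lra.
Qed.


Lemma D_sq (f : R -> R) x df : is_derive f x df -> is_derive (fun t => f t ^ 2) x (2 * f x * df).
Proof.
  intros H. apply (D_ext (fun t => f t * f t) (fun t => f t ^ 2) x (2 * f x * df)).
  { intros t. simpl. ring. }
  eapply D_val. { apply D_mult; eauto. } simpl. ring.
Qed.

Lemma dot_lb y1 y2 z1 z2 : - ((y1^2 + y2^2) + (z1^2+z2^2)) <= 2 * (y1 * z1 + y2 * z2).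
Proof. pose proof (pow2_ge_0 (y1 + z1)). pose proof (pow2_ge_0 (y2 + z2)). nra. Qed.
Lemma dot_ub y1 y2 z1 z2 : 2 * (y1 * z1 + y2 * z2) <= ((y1^2 + y2^2) + (z1^2+z2^2)).
Proof. pose proof (pow2_ge_0 (y1 - z1)). pose proof (pow2_ge_0 (y2 - z2)). nra. Qed.
Lemma cmul_norm g1 g2 y1 y2 :
  (g1 * y1 - g2 * y2)^2 + (g1 * y2 + g2 * y1)^2 = (g1^2 + g2^2) * (y1^2 + y2^2).
Proof. ring. Qed.
Lemma abs_lb c Y : 0 <= Y -> - (Rabs c * Y) <= c * Y.
Proof. intros H. destruct (proj1 (Rabs_le_between c (Rabs c)) (Rle_refl _)) as [H1 H2]. nra. Qed.
Lemma abs_ub c Y : 0 <= Y -> c * Y <= Rabs c * Y.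
Proof. intros H. destruct (proj1 (Rabs_le_between c (Rabs c)) (Rle_refl _)) as [H1 H2]. nra. Qed.

Lemma small_sum (u1 u2 : R -> R) :
  lim_left0 u1 1 -> lim_left0 u2 1 ->
  forall e a, 0 < e -> a < 1 -> exists x, a < x < 1 /\ u1 x ^ 2 + u2 x ^ 2 < e.
Proof.
  intros H1 H2 e a He Ha.
  set (eta := Rmin 1 (e / 4)).
  assert (Heta : 0 < eta /\ eta <= 1 /\ eta <= e / 4) by (unfold eta, Rmin; destruct Rle_dec; lra).
  destruct (H1 eta) as [d1 [Hd1 H1']]; [lra|].
  destruct (H2 eta) as [d2 [Hd2 H2']]; [lra|].
  set (x := Rmax (Rmax (1 - d1/2) (1 - d2/2)) ((a + 1)/2)).
  assert (Hx : 1 - d1 < x < 1 /\ 1 - d2 < x /\ a < x) by (unfold x, Rmax; repeat destruct Rle_dec; lra).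
  exists x. split; [lra|].
  specialize (H1' x ltac:(lra)). specialize (H2' x ltac:(lra)).
  apply Rabs_lt_between in H1'. apply Rabs_lt_between in H2'.
  assert (u1 x ^ 2 < eta) by nra. assert (u2 x ^ 2 < eta) by nra. lra.
Qed.

Lemma exp_le_exp x y : x <= y -> exp x <= exp y.
Proof. intros H. destruct (Rle_lt_or_eq_dec x y H) as [H1|H1]. left; apply exp_increasing; auto. subst; lra. Qed.

Lemma gscale g X B : 0 <= g <= 1 -> - B <= X <= B -> - B <= g * X <= B.
Proof. intros [H1 H2] [H3 H4]. assert (0 <= B) by lra. split; nra. Qed.


Lemma Epos (eps c b a : R) (p u1 u2 v1 v2 : R -> R) :
  0 < eps -> 0 <= a < 1 ->
  (forall x, a < x < 1 -> 0 < p x) ->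
  (forall x, a < x < 1 -> is_derive p x (p x * eps / (1 - x^2))) ->
  (forall x, a < x < 1 -> is_derive u1 x (v1 x / p x)) ->
  (forall x, a < x < 1 -> is_derive u2 x (v2 x / p x)) ->
  (forall x, a < x < 1 -> is_derive v1 x (p x / (1 - x^2) * (c * u1 x - b * u2 x))) ->
  (forall x, a < x < 1 -> is_derive v2 x (p x / (1 - x^2) * (c * u2 x + b * u1 x))) ->
  lim_left0 u1 1 -> lim_left0 u2 1 ->
  exists a' M, a <= a' < 1 /\ forall x, a' < x < 1 -> v1 x ^ 2 + v2 x ^ 2 <= M.
Proof.
  intros Heps Ha Hp Hdp Hu1 Hu2 Hv1 Hv2 Hl1 Hl2.
  set (c' := c / eps). set (b' := b / eps).
  set (n := c' ^ 2 + b' ^ 2).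
  set (K := 2 + 2 * Rabs c' + n ^ 2).
  assert (HK : 2 <= K) by (unfold K, n; pose proof (Rabs_pos c'); nra).
  set (a1 := Rmax a (1 - eps / (2 * K))).
  assert (Ha1 : a <= a1 < 1 /\ 1 - eps / (2 * K) <= a1).
  { unfold a1, Rmax. assert (0 < eps / (2 * K)) by (apply Rdiv_lt_0_compat; lra).
    destruct Rle_dec; lra. }
  set (y1 := fun t => p t * u1 t). set (y2 := fun t => p t * u2 t).
  set (Z1 := fun t => v1 t - (c' * y1 t - b' * y2 t)).
  set (Z2 := fun t => v2 t - (c' * y2 t + b' * y1 t)).
  set (Y := fun t => y1 t ^ 2 + y2 t ^ 2).
  set (W := fun t => Z1 t ^ 2 + Z2 t ^ 2).
  set (e := fun t => eps / (1 - t ^ 2)).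
  assert (Hden : forall x, a < x < 1 -> 0 < 1 - x ^ 2) by (intros; nra).
  assert (Hdy1 : forall x, a < x < 1 -> is_derive y1 x (e x * y1 x + v1 x)).
  { intros x Hx. eapply D_val. apply (D_mult p u1); auto.
    unfold e, y1. specialize (Hp x Hx). specialize (Hden x Hx). field. lra. }
  assert (Hdy2 : forall x, a < x < 1 -> is_derive y2 x (e x * y2 x + v2 x)).
  { intros x Hx. eapply D_val. apply (D_mult p u2); auto.
    unfold e, y2. specialize (Hp x Hx). specialize (Hden x Hx). field. lra. }
  assert (Hc : c = c' * eps) by (unfold c'; field; lra).
  assert (Hb : b = b' * eps) by (unfold b'; field; lra).
  assert (HdZ1 : forall x, a < x < 1 -> is_derive Z1 x (- (c' * v1 x - b' * v2 x))).
  { intros x Hx. eapply D_val. apply D_minus; [apply Hv1; auto|].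
    apply D_minus; apply D_scal; auto.
    unfold e, y1, y2. rewrite Hc, Hb. specialize (Hden x Hx). field. lra. }
  assert (HdZ2 : forall x, a < x < 1 -> is_derive Z2 x (- (c' * v2 x + b' * v1 x))).
  { intros x Hx. eapply D_val. apply D_minus; [apply Hv2; auto|].
    apply D_plus; apply D_scal; auto.
    unfold e, y1, y2. rewrite Hc, Hb. specialize (Hden x Hx). field. lra. }
  set (dY := fun x => 2 * y1 x * (e x * y1 x + v1 x) + 2 * y2 x * (e x * y2 x + v2 x)).
  set (dW := fun x => 2 * Z1 x * (- (c' * v1 x - b' * v2 x)) + 2 * Z2 x * (- (c' * v2 x + b' * v1 x))).
  assert (HdY : forall x, a < x < 1 -> is_derive Y x (dY x)).
  { intros x Hx. apply D_plus; apply D_sq; auto. }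
  assert (HdW : forall x, a < x < 1 -> is_derive W x (dW x)).
  { intros x Hx. apply D_plus; apply D_sq; auto. }
  assert (Hv1e : forall x, v1 x = Z1 x + (c' * y1 x - b' * y2 x)) by (intros; unfold Z1; ring).
  assert (Hv2e : forall x, v2 x = Z2 x + (c' * y2 x + b' * y1 x)) by (intros; unfold Z2; ring).
  assert (HYe : forall x, dY x = 2 * e x * Y x + 2 * (y1 x * Z1 x + y2 x * Z2 x) + 2 * c' * Y x).
  { intros x. unfold dY, Y. rewrite Hv1e, Hv2e. ring. }
  set (g1 := c' ^ 2 - b' ^ 2). set (g2 := 2 * c' * b').
  assert (Hg : g1 ^ 2 + g2 ^ 2 = n ^ 2) by (unfold g1, g2, n; ring).
  assert (HWe : forall x, dW x = - 2 * c' * W x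
      - 2 * (Z1 x * (g1 * y1 x - g2 * y2 x) + Z2 x * (g1 * y2 x + g2 * y1 x))).
  { intros x. unfold dW, W, g1, g2. rewrite Hv1e, Hv2e. ring. }
  assert (HYpos : forall x, 0 <= Y x) by (intros; unfold Y; nra).
  assert (HWpos : forall x, 0 <= W x) by (intros; unfold W; nra).
  assert (Hcross : forall x, - (W x + n ^ 2 * Y x) <=
      2 * (Z1 x * (g1 * y1 x - g2 * y2 x) + Z2 x * (g1 * y2 x + g2 * y1 x)) <= W x + n ^ 2 * Y x).
  { intros x. rewrite <- Hg. unfold Y, W. rewrite <- cmul_norm. split; [apply dot_lb|apply dot_ub]. }
  assert (Hyz : forall x, - (Y x + W x) <= 2 * (y1 x * Z1 x + y2 x * Z2 x) <= Y x + W x).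
  { intros x. unfold Y, W. split; [apply dot_lb|apply dot_ub]. }
  assert (HeK : forall x, a1 < x < 1 -> K <= e x).
  { intros x Hx. unfold e. apply Rmult_le_reg_r with (1 - x ^ 2). nra.
    replace (eps / (1 - x ^ 2) * (1 - x ^ 2)) with eps by (field; nra).
    set (d := eps / (2 * K)).
    assert (1 - d <= x) by (unfold d; lra).
    assert (d * (2 * K) = eps) by (unfold d; field; lra).
    assert (K * (1 - x ^ 2) = K * (1 - x) * (1 + x)) by ring.
    assert (K * (1 - x) <= K * d) by (apply Rmult_le_compat_l; lra).
    assert (0 <= K * (1 - x)) by (apply Rmult_le_pos; lra).
    nra. }
  assert (HF : forall x, a1 < x < 1 -> K * (Y x - W x) <= dY x - dW x).
  { intros x Hx. rewrite HYe, HWe.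
    pose proof (HeK x Hx). pose proof (Hcross x). pose proof (Hyz x).
    pose proof (abs_lb c' (Y x) (HYpos x)). pose proof (abs_lb c' (W x) (HWpos x)).
    pose proof (HYpos x). pose proof (HWpos x).
    assert (0 <= n ^ 2) by apply pow2_ge_0.
    assert (K * Y x <= e x * Y x) by (apply Rmult_le_compat_r; auto).
    assert ((1 + 2 * Rabs c' + n ^ 2) * Y x <= K * Y x) by (apply Rmult_le_compat_r; auto; unfold K; lra).
    assert (2 * Rabs c' * W x + 2 * W x <= K * W x) by (assert (2 * Rabs c' + 2 <= K) by (unfold K; nra); nra).
    lra. }
  set (f := fun t => u1 t ^ 2 + u2 t ^ 2).
  set (L := 2 + 2 * Rabs c').
  assert (Hfe : forall x, a < x < 1 -> f x = Y x / (p x) ^ 2).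
  { intros x Hx. unfold f, Y, y1, y2. specialize (Hp x Hx). field. lra. }
  assert (Hdf : forall x, a < x < 1 -> is_derive f x (2 * u1 x * (v1 x / p x) + 2 * u2 x * (v2 x / p x))).
  { intros x Hx. apply D_plus; apply D_sq; auto. }
  assert (Hcone : forall x, a1 < x < 1 -> W x <= Y x ->
     - L * f x <= 2 * u1 x * (v1 x / p x) + 2 * u2 x * (v2 x / p x)).
  { intros x Hx HWY. assert (Hx' : a < x < 1) by lra. rewrite (Hfe x Hx').
    assert (Hpx := Hp x Hx').
    assert (E : 2 * u1 x * (v1 x / p x) + 2 * u2 x * (v2 x / p x)
               = (2 * (y1 x * Z1 x + y2 x * Z2 x) + 2 * c' * Y x) / (p x) ^ 2).
    { unfold Y, y1, y2. rewrite Hv1e, Hv2e. unfold y1, y2. field. lra. }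
    rewrite E. unfold Rdiv. 
    assert (0 < / (p x) ^ 2) by (apply Rinv_0_lt_compat; nra).
    pose proof (Hyz x). pose proof (abs_lb c' (Y x) (HYpos x)).
    assert (- L * Y x <= 2 * (y1 x * Z1 x + y2 x * Z2 x) + 2 * c' * Y x) by (unfold L; lra).
    nra. }
  assert (HFneg : forall x, a1 < x < 1 -> Y x - W x <= 0).
  { intros x2 Hx2. destruct (Rle_or_lt (Y x2 - W x2) 0) as [Hle|Hgt]; [exact Hle|exfalso].
    assert (Hpos : forall x, x2 <= x < 1 -> 0 < Y x - W x).
    { intros x Hx.
      pose proof (grow_le (fun t => Y t - W t) (fun t => dY t - dW t) K a1 1) as G.
      simpl in G.
      assert (G' : (Y x2 - W x2) * exp (- K * x2) <= (Y x - W x) * exp (- K * x)).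
      { apply G; try lra.
        - intros z Hz. apply D_minus; [apply HdY|apply HdW]; lra.
        - intros z Hz. apply HF; lra. }
      pose proof (exp_pos (- K * x2)). pose proof (exp_pos (- K * x)). nra. }
    set (x3 := (x2 + 1) / 2).
    assert (Hf3 : 0 < f x3).
    { rewrite Hfe by (unfold x3; lra). pose proof (Hpos x3 ltac:(unfold x3; lra)).
      pose proof (HWpos x3). assert (0 < p x3) by (apply Hp; unfold x3; lra).
      apply Rdiv_lt_0_compat; nra. }
    assert (Hlow : forall x, x3 <= x < 1 -> f x3 * exp (- L) <= f x).
    { intros x Hx.
      pose proof (grow_le f (fun t => 2 * u1 t * (v1 t / p t) + 2 * u2 t * (v2 t / p t)) (- L) x2 1) as G.
      simpl in G.
      assert (G' : f x3 * exp (- - L * x3) <= f x * exp (- - L * x)).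
      { apply G; try (unfold x3 in *; lra).
        - intros z Hz. apply Hdf. lra.
        - intros z Hz. apply Hcone; try lra. pose proof (Hpos z ltac:(lra)). lra. }
      assert (HL : 0 <= L) by (unfold L; pose proof (Rabs_pos c'); lra).
      assert (Hm : exp (- L) <= exp (- - L * x3) * exp (- (- - L * x))).
      { rewrite <- exp_plus. apply exp_le_exp. assert (x - x3 <= 1) by (unfold x3 in *; lra). nra. }
      assert (E1 : f x = f x * exp (- - L * x) * exp (- (- - L * x))).
      { rewrite Rmult_assoc, <- exp_plus, Rplus_opp_r, exp_0; ring. }
      assert (0 < exp (- (- - L * x))) by apply exp_pos.
      rewrite E1.
      apply Rle_trans with (f x3 * (exp (- - L * x3) * exp (- (- - L * x)))).
      - apply Rmult_le_compat_l; lra.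
      - rewrite <- Rmult_assoc. apply Rmult_le_compat_r; lra. }
    assert (He0 : 0 < f x3 * exp (- L)) by (pose proof (exp_pos (- L)); nra).
    destruct (small_sum u1 u2 Hl1 Hl2 _ x3 He0) as [x [Hx Hfx]]; [unfold x3; lra|].
    pose proof (Hlow x ltac:(lra)). unfold f in *. lra. }
  set (x4 := (a1 + 1) / 2).
  assert (HWb : forall x, x4 <= x < 1 -> W x <= W x4 * exp K).
  { intros x Hx.
    pose proof (grow_le (fun t => - W t) (fun t => - dW t) K a1 1) as G. simpl in G.
    assert (G' : - W x4 * exp (- K * x4) <= - W x * exp (- K * x)).
    { apply G; try (unfold x4 in *; lra).
      - intros z Hz. apply (is_derive_opp W). apply HdW. lra.
      - intros z Hz. rewrite HWe. pose proof (HFneg z Hz). pose proof (Hcross z).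
        pose proof (abs_lb c' (W z) (HWpos z)). pose proof (HYpos z). pose proof (HWpos z).
        assert (0 <= n ^ 2) by apply pow2_ge_0.
        assert (n ^ 2 * Y z <= n ^ 2 * W z) by (apply Rmult_le_compat_l; lra).
        assert ((1 + 2 * Rabs c' + n ^ 2) * W z <= K * W z) by (apply Rmult_le_compat_r; auto; unfold K; lra).
        lra. }
    assert (E1 : W x = W x * exp (- K * x) * exp (- (- K * x))).
    { rewrite Rmult_assoc, <- exp_plus, Rplus_opp_r, exp_0; ring. }
    assert (Hm : exp (- K * x4) * exp (- (- K * x)) <= exp K).
    { rewrite <- exp_plus. apply exp_le_exp. assert (x - x4 <= 1) by (unfold x4 in *; lra). nra. }
    rewrite E1. pose proof (HWpos x4). pose proof (exp_pos (- (- K * x))).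
    apply Rle_trans with (W x4 * exp (- K * x4) * exp (- (- K * x))).
    - apply Rmult_le_compat_r; lra.
    - rewrite Rmult_assoc. apply Rmult_le_compat_l; lra. }
  exists x4, ((2 + 2 * n) * (W x4 * exp K)). split; [unfold x4; lra|].
  intros x Hx.
  assert (Hx' : a1 < x < 1) by (unfold x4 in *; lra).
  pose proof (HWb x ltac:(lra)). pose proof (HFneg x Hx').
  rewrite (Hv1e x), (Hv2e x).
  pose proof (cmul_norm c' b' (y1 x) (y2 x)) as Hn.
  pose proof (dot_ub (Z1 x) (Z2 x) (c' * y1 x - b' * y2 x) (c' * y2 x + b' * y1 x)).
  pose proof (HYpos x). pose proof (HWpos x).
  assert (0 <= n) by (unfold n; nra).
  assert (n * Y x <= n * W x) by (apply Rmult_le_compat_l; lra).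
  assert ((2 + 2 * n) * W x <= (2 + 2 * n) * (W x4 * exp K)) by (apply Rmult_le_compat_l; lra).
  unfold Y, W, n in *. nra.
Qed.


Lemma E0 (c b a : R) (u1 u2 v1 v2 : R -> R) :
  0 <= a < 1 ->
  (forall x, a < x < 1 -> is_derive u1 x (v1 x)) ->
  (forall x, a < x < 1 -> is_derive u2 x (v2 x)) ->
  (forall x, a < x < 1 -> is_derive v1 x (1 / (1 - x^2) * (c * u1 x - b * u2 x))) ->
  (forall x, a < x < 1 -> is_derive v2 x (1 / (1 - x^2) * (c * u2 x + b * u1 x))) ->
  lim_left0 u1 1 -> lim_left0 u2 1 ->
  exists a' M, a <= a' < 1 /\ forall x, a' < x < 1 -> v1 x ^ 2 + v2 x ^ 2 <= M.
Proof.
  intros Ha Hu1 Hu2 Hv1 Hv2 Hl1 Hl2.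
  set (n := c ^ 2 + b ^ 2).
  assert (Hn : 0 <= n) by (unfold n; nra).
  pose proof (Rabs_pos c) as Hac.
  set (K := n + 4 + 8 * Rabs c).
  set (K2 := K + 2 * Rabs c + 1 + 4 * n).
  assert (HK2 : 4 <= K2) by (unfold K2, K; lra).
  set (a1 := Rmax a (1 - 2 / K2)).
  assert (Ha1 : a <= a1 < 1 /\ 1 - 2 / K2 <= a1).
  { unfold a1, Rmax. assert (0 < 2 / K2) by (apply Rdiv_lt_0_compat; lra).
    destruct Rle_dec; lra. }
  set (y1 := fun t => u1 t / (1 - t) + v1 t). set (y2 := fun t => u2 t / (1 - t) + v2 t).
  set (w1 := fun t => y1 t - v1 t). set (w2 := fun t => y2 t - v2 t).
  set (gg := fun t => 1 / (1 + t)).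
  set (Y := fun t => y1 t ^ 2 + y2 t ^ 2).
  set (W := fun t => v1 t ^ 2 + v2 t ^ 2).
  assert (Hw1 : forall x, a < x < 1 -> u1 x = (1 - x) * w1 x).
  { intros x Hx. unfold w1, y1. field. lra. }
  assert (Hw2 : forall x, a < x < 1 -> u2 x = (1 - x) * w2 x).
  { intros x Hx. unfold w2, y2. field. lra. }
  assert (Hdv1 : forall x, a < x < 1 -> is_derive v1 x (gg x * (c * w1 x - b * w2 x))).
  { intros x Hx. eapply D_val. apply Hv1; auto. rewrite (Hw1 x Hx), (Hw2 x Hx). unfold gg. field. repeat split; nra. }
  assert (Hdv2 : forall x, a < x < 1 -> is_derive v2 x (gg x * (c * w2 x + b * w1 x))).
  { intros x Hx. eapply D_val. apply Hv2; auto. rewrite (Hw1 x Hx), (Hw2 x Hx). unfold gg. field. repeat split; nra. }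
  assert (Hdy1 : forall x, a < x < 1 -> is_derive y1 x (y1 x / (1 - x) + gg x * (c * w1 x - b * w2 x))).
  { intros x Hx. eapply D_val. apply D_plus; [|apply Hdv1; auto].
    apply (D_mult u1 (fun t => / (1 - t))). apply Hu1; auto.
    apply (D_inv (fun t => 1 - t)). apply D_minus; [apply D_const|apply D_id]. lra.
    unfold y1. simpl. field. lra. }
  assert (Hdy2 : forall x, a < x < 1 -> is_derive y2 x (y2 x / (1 - x) + gg x * (c * w2 x + b * w1 x))).
  { intros x Hx. eapply D_val. apply D_plus; [|apply Hdv2; auto].
    apply (D_mult u2 (fun t => / (1 - t))). apply Hu2; auto.
    apply (D_inv (fun t => 1 - t)). apply D_minus; [apply D_const|apply D_id]. lra.
    unfold y2. simpl. field. lra. }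
  set (dY := fun x => 2 * y1 x * (y1 x / (1 - x) + gg x * (c * w1 x - b * w2 x))
                   + 2 * y2 x * (y2 x / (1 - x) + gg x * (c * w2 x + b * w1 x))).
  set (dW := fun x => 2 * v1 x * (gg x * (c * w1 x - b * w2 x)) + 2 * v2 x * (gg x * (c * w2 x + b * w1 x))).
  assert (HdY : forall x, a < x < 1 -> is_derive Y x (dY x)).
  { intros x Hx. apply D_plus; apply D_sq; auto. }
  assert (HdW : forall x, a < x < 1 -> is_derive W x (dW x)).
  { intros x Hx. apply D_plus; apply D_sq; auto. }
  assert (HYpos : forall x, 0 <= Y x) by (intros; unfold Y; nra).
  assert (HWpos : forall x, 0 <= W x) by (intros; unfold W; nra).
  assert (Hgg : forall x, a < x < 1 -> 0 <= gg x <= 1).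
  { intros x Hx. unfold gg. split. apply Rlt_le, Rdiv_lt_0_compat; lra.
    apply Rmult_le_reg_r with (1 + x); [lra|]. unfold Rdiv. rewrite Rmult_assoc, Rinv_l by lra. lra. }
  assert (HA : forall x, - ((2 * Rabs c + 1) * Y x + n * W x) <=
      2 * (y1 x * (c * w1 x - b * w2 x) + y2 x * (c * w2 x + b * w1 x)) <= (2 * Rabs c + 1) * Y x + n * W x).
  { intros x.
    assert (E : y1 x * (c * w1 x - b * w2 x) + y2 x * (c * w2 x + b * w1 x)
       = c * Y x - (y1 x * (c * v1 x - b * v2 x) + y2 x * (c * v2 x + b * v1 x))).
    { unfold w1, w2, Y. ring. }
    rewrite E.
    pose proof (dot_lb (y1 x) (y2 x) (c * v1 x - b * v2 x) (c * v2 x + b * v1 x)).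
    pose proof (dot_ub (y1 x) (y2 x) (c * v1 x - b * v2 x) (c * v2 x + b * v1 x)).
    pose proof (cmul_norm c b (v1 x) (v2 x)).
    pose proof (abs_lb c (Y x) (HYpos x)). pose proof (abs_ub c (Y x) (HYpos x)).
    replace (c ^ 2 + b ^ 2) with n in * by reflexivity. unfold Y, W in *. lra. }
  assert (HB : forall x, - ((2 * Rabs c + 1) * W x + n * Y x) <=
      2 * (v1 x * (c * w1 x - b * w2 x) + v2 x * (c * w2 x + b * w1 x)) <= (2 * Rabs c + 1) * W x + n * Y x).
  { intros x.
    assert (E : v1 x * (c * w1 x - b * w2 x) + v2 x * (c * w2 x + b * w1 x)
       = (v1 x * (c * y1 x - b * y2 x) + v2 x * (c * y2 x + b * y1 x)) - c * W x).
    { unfold w1, w2, W. ring. }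
    rewrite E.
    pose proof (dot_lb (v1 x) (v2 x) (c * y1 x - b * y2 x) (c * y2 x + b * y1 x)).
    pose proof (dot_ub (v1 x) (v2 x) (c * y1 x - b * y2 x) (c * y2 x + b * y1 x)).
    pose proof (cmul_norm c b (y1 x) (y2 x)).
    pose proof (abs_lb c (W x) (HWpos x)). pose proof (abs_ub c (W x) (HWpos x)).
    replace (c ^ 2 + b ^ 2) with n in * by reflexivity. unfold Y, W in *. lra. }
  assert (HdYe : forall x, a < x < 1 -> dY x = 2 * Y x / (1 - x) +
     gg x * (2 * (y1 x * (c * w1 x - b * w2 x) + y2 x * (c * w2 x + b * w1 x)))).
  { intros x Hx. unfold dY, Y. field. lra. }
  assert (HdWe : forall x, dW x =
     gg x * (2 * (v1 x * (c * w1 x - b * w2 x) + v2 x * (c * w2 x + b * w1 x)))).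
  { intros x. unfold dW. ring. }
  assert (HdYl : forall x, a < x < 1 -> 2 * Y x / (1 - x) - ((2 * Rabs c + 1) * Y x + n * W x) <= dY x).
  { intros x Hx. rewrite HdYe by auto. pose proof (gscale _ _ _ (Hgg x Hx) (HA x)). lra. }
  assert (HdWu : forall x, a < x < 1 -> dW x <= (2 * Rabs c + 1) * W x + n * Y x).
  { intros x Hx. rewrite HdWe. pose proof (gscale _ _ _ (Hgg x Hx) (HB x)). lra. }
  assert (Ht : forall x, a1 < x < 1 -> K2 <= 2 / (1 - x)).
  { intros x Hx. apply Rmult_le_reg_r with (1 - x). lra.
    replace (2 / (1 - x) * (1 - x)) with 2 by (field; lra).
    assert (1 - x <= 2 / K2) by lra.
    assert (2 / K2 * K2 = 2) by (field; lra). nra. }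
  assert (HF : forall x, a1 < x < 1 -> K * (Y x - 4 * W x) <= dY x - 4 * dW x).
  { intros x Hx. assert (Hx' : a < x < 1) by lra.
    pose proof (HdYl x Hx'). pose proof (HdWu x Hx'). pose proof (Ht x Hx).
    pose proof (HYpos x). pose proof (HWpos x).
    assert (E : 2 * Y x / (1 - x) = 2 / (1 - x) * Y x) by (field; lra). rewrite E in *.
    assert (K2 * Y x <= 2 / (1 - x) * Y x) by (apply Rmult_le_compat_r; lra).
    unfold K2, K in *. nra. }
  set (L := 2 * Rabs c + 1 + n).
  set (Q := fun t => (1 - t) ^ 2 * Y t).
  set (dQ := fun t => 2 * (1 - t) * (0 - 1) * Y t + (1 - t) ^ 2 * dY t).
  assert (HdQ : forall x, a < x < 1 -> is_derive Q x (dQ x)).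
  { intros x Hx. apply (D_mult (fun t => (1 - t) ^ 2) Y).
    apply (D_sq (fun t => 1 - t)). apply D_minus; [apply D_const|apply D_id]. auto. }
  assert (Hcone : forall x, a < x < 1 -> 4 * W x <= Y x -> - L * Q x <= dQ x).
  { intros x Hx HWY. pose proof (HdYl x Hx). unfold dQ, Q.
    assert (E : 2 * Y x / (1 - x) = 2 / (1 - x) * Y x) by (field; lra).
    assert (E2 : (1 - x) ^ 2 * (2 / (1 - x) * Y x) = 2 * (1 - x) * Y x) by (field; lra).
    assert (0 <= (1 - x) ^ 2) by apply pow2_ge_0.
    assert (n * W x <= n * Y x) by (pose proof (HWpos x); apply Rmult_le_compat_l; lra).
    assert (Hb : - L * Y x <= dY x - 2 / (1 - x) * Y x) by (unfold L; lra).
    assert (H2 : (1 - x) ^ 2 * (- L * Y x) <= (1 - x) ^ 2 * (dY x - 2 / (1 - x) * Y x))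
      by (apply Rmult_le_compat_l; lra).
    rewrite Rmult_minus_distr_l, E2 in H2. lra. }
  assert (HFneg : forall x, a1 < x < 1 -> Y x - 4 * W x <= 0).
  { intros x2 Hx2. destruct (Rle_or_lt (Y x2 - 4 * W x2) 0) as [Hle|Hgt]; [exact Hle|exfalso].
    assert (Hpos : forall x, x2 <= x < 1 -> 0 < Y x - 4 * W x).
    { intros x Hx.
      pose proof (grow_le (fun t => Y t - 4 * W t) (fun t => dY t - 4 * dW t) K a1 1) as G.
      simpl in G.
      assert (G' : (Y x2 - 4 * W x2) * exp (- K * x2) <= (Y x - 4 * W x) * exp (- K * x)).
      { apply G; try lra.
        - intros z Hz. apply D_minus; [apply HdY|apply D_scal; apply HdW]; lra.
        - intros z Hz. apply HF; lra. }
      pose proof (exp_pos (- K * x2)). pose proof (exp_pos (- K * x)). nra. }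
    set (x3 := (x2 + 1) / 2).
    assert (HQ3 : 0 < Q x3).
    { unfold Q. pose proof (Hpos x3 ltac:(unfold x3; lra)). pose proof (HWpos x3).
      assert (0 < (1 - x3) ^ 2) by (apply pow_lt; unfold x3; lra). nra. }
    assert (Hlow : forall x, x3 <= x < 1 -> Q x3 * exp (- L) <= Q x).
    { intros x Hx.
      pose proof (grow_le Q dQ (- L) x2 1) as G.
      assert (G' : Q x3 * exp (- - L * x3) <= Q x * exp (- - L * x)).
      { apply G; try (unfold x3 in *; lra).
        - intros z Hz. apply HdQ. lra.
        - intros z Hz. apply Hcone; try lra. pose proof (Hpos z ltac:(lra)). lra. }
      assert (HL : 0 <= L) by (unfold L; lra).
      assert (Hm : exp (- L) <= exp (- - L * x3) * exp (- (- - L * x))).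
      { rewrite <- exp_plus. apply exp_le_exp. assert (x - x3 <= 1) by (unfold x3 in *; lra). nra. }
      assert (E1 : Q x = Q x * exp (- - L * x) * exp (- (- - L * x))).
      { rewrite Rmult_assoc, <- exp_plus, Rplus_opp_r, exp_0; ring. }
      assert (0 < exp (- (- - L * x))) by apply exp_pos.
      rewrite E1.
      apply Rle_trans with (Q x3 * (exp (- - L * x3) * exp (- (- - L * x)))).
      - apply Rmult_le_compat_l; lra.
      - rewrite <- Rmult_assoc. apply Rmult_le_compat_r; lra. }
    assert (He0 : 0 < Q x3 * exp (- L) / 4) by (pose proof (exp_pos (- L)); apply Rdiv_lt_0_compat; nra).
    destruct (small_sum u1 u2 Hl1 Hl2 _ x3 He0) as [x [Hx Hfx]]; [unfold x3; lra|].
    pose proof (Hlow x ltac:(lra)).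
    assert (Hx' : a < x < 1) by (unfold x3 in *; lra).
    pose proof (Hpos x ltac:(unfold x3 in *; lra)).
    rewrite (Hw1 x Hx'), (Hw2 x Hx') in Hfx.
    assert (Hq : Q x / 4 <= ((1 - x) * w1 x) ^ 2 + ((1 - x) * w2 x) ^ 2).
    { unfold Q, Y, W, w1, w2 in *.
      pose proof (dot_ub (y1 x) (y2 x) (2 * v1 x) (2 * v2 x)).
      assert (0 <= (1 - x) ^ 2) by apply pow2_ge_0.
      assert (H3 : (y1 x ^ 2 + y2 x ^ 2) / 4 <= (y1 x - v1 x) ^ 2 + (y2 x - v2 x) ^ 2) by nra.
      apply Rmult_le_compat_l with (r := (1 - x) ^ 2) in H3; [|auto]. nra. }
    lra. }
  set (x4 := (a1 + 1) / 2).
  set (KB := 1 + 2 * Rabs c + 4 * n).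
  assert (HWb : forall x, x4 <= x < 1 -> W x <= W x4 * exp KB).
  { intros x Hx.
    pose proof (grow_le (fun t => - W t) (fun t => - dW t) KB a1 1) as G. simpl in G.
    assert (G' : - W x4 * exp (- KB * x4) <= - W x * exp (- KB * x)).
    { apply G; try (unfold x4 in *; lra).
      - intros z Hz. apply (is_derive_opp W). apply HdW. lra.
      - intros z Hz. pose proof (HFneg z Hz). pose proof (HdWu z ltac:(lra)).
        pose proof (HYpos z). pose proof (HWpos z).
        assert (n * Y z <= n * (4 * W z)) by (apply Rmult_le_compat_l; lra).
        unfold KB. lra. }
    assert (HKB : 0 <= KB) by (unfold KB; lra).
    assert (E1 : W x = W x * exp (- KB * x) * exp (- (- KB * x))).
    { rewrite Rmult_assoc, <- exp_plus, Rplus_opp_r, exp_0; ring. }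
    assert (Hm : exp (- KB * x4) * exp (- (- KB * x)) <= exp KB).
    { rewrite <- exp_plus. apply exp_le_exp. assert (x - x4 <= 1) by (unfold x4 in *; lra). nra. }
    rewrite E1. pose proof (HWpos x4). pose proof (exp_pos (- (- KB * x))).
    apply Rle_trans with (W x4 * exp (- KB * x4) * exp (- (- KB * x))).
    - apply Rmult_le_compat_r; lra.
    - rewrite Rmult_assoc. apply Rmult_le_compat_l; lra. }
  exists x4, (W x4 * exp KB). split; [unfold x4; lra|].
  intros x Hx. apply (HWb x). unfold x4 in *; lra.
Qed.


Definition pw (eps y : R) := exp (eps / 2 * (ln (1 + y) - ln (1 - y))).

Lemma pw_pos eps y : 0 < pw eps y.
Proof. apply exp_pos. Qed.

Lemma pw_deriv eps x : -1 < x < 1 -> is_derive (pw eps) x (pw eps x * eps / (1 - x ^ 2)).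
Proof.
  intros Hx. unfold pw. auto_derive.
  - repeat split; lra.
  - unfold Rminus. field. repeat split; nra.
Qed.

Lemma pw_zero y : pw 0 y = 1.
Proof. unfold pw. replace (0 / 2 * (ln (1 + y) - ln (1 - y))) with 0 by field. apply exp_0. Qed.

Lemma pw_mono eps x y : 0 <= eps -> -1 < x -> x <= y -> y < 1 -> pw eps x <= pw eps y.
Proof.
  intros He Hx Hxy Hy.
  apply (mono_le (pw eps) (fun t => pw eps t * eps / (1 - t ^ 2)) (-1) 1); auto.
  - intros z Hz. apply pw_deriv; auto.
  - intros z Hz. pose proof (pw_pos eps z). apply Rmult_le_pos. apply Rmult_le_pos; lra.
    apply Rlt_le, Rinv_0_lt_compat. nra.
Qed.

Lemma lim_left0_plus f g a : lim_left0 f a -> lim_left0 g a -> lim_left0 (fun x => f x + g x) a.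
Proof.
  intros Hf Hg e He. destruct (Hf (e/2)) as [d1 [Hd1 H1]]; [lra|].
  destruct (Hg (e/2)) as [d2 [Hd2 H2]]; [lra|].
  exists (Rmin d1 d2). split. apply Rmin_case; lra.
  intros x Hx. assert (Rmin d1 d2 <= d1) by apply Rmin_l. assert (Rmin d1 d2 <= d2) by apply Rmin_r.
  specialize (H1 x ltac:(lra)). specialize (H2 x ltac:(lra)).
  eapply Rle_lt_trans. apply Rabs_triang. lra.
Qed.
Lemma lim_right0_plus f g a : lim_right0 f a -> lim_right0 g a -> lim_right0 (fun x => f x + g x) a.
Proof.
  intros Hf Hg e He. destruct (Hf (e/2)) as [d1 [Hd1 H1]]; [lra|].
  destruct (Hg (e/2)) as [d2 [Hd2 H2]]; [lra|].
  exists (Rmin d1 d2). split. apply Rmin_case; lra.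
  intros x Hx. assert (Rmin d1 d2 <= d1) by apply Rmin_l. assert (Rmin d1 d2 <= d2) by apply Rmin_r.
  specialize (H1 x ltac:(lra)). specialize (H2 x ltac:(lra)).
  eapply Rle_lt_trans. apply Rabs_triang. lra.
Qed.

Lemma lim_left0_mul (v u : R -> R) a lo M : lo < a -> (forall x, lo < x < a -> Rabs (v x) <= M) ->
  lim_left0 u a -> lim_left0 (fun x => v x * u x) a.
Proof.
  intros Hlo Hv Hu e He.
  set (M' := Rabs M + 1).
  assert (HM' : 0 < M') by (unfold M'; pose proof (Rabs_pos M); lra).
  destruct (Hu (e / M')) as [d [Hd H]]. apply Rdiv_lt_0_compat; lra.
  exists (Rmin d (a - lo)). split. apply Rmin_case; lra.
  intros x Hx. assert (Rmin d (a - lo) <= d) by apply Rmin_l. assert (Rmin d (a - lo) <= a - lo) by apply Rmin_r.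
  specialize (H x ltac:(lra)). specialize (Hv x ltac:(lra)).
  rewrite Rabs_mult.
  assert (Rabs (v x) <= M') by (unfold M'; pose proof (Rle_abs M); lra).
  assert (Rabs (u x) * M' < e) by (apply (Rmult_lt_compat_r M') in H; [|lra]; unfold Rdiv in H; rewrite Rmult_assoc, Rinv_l in H by lra; lra).
  pose proof (Rabs_pos (u x)). pose proof (Rabs_pos (v x)). nra.
Qed.
Lemma lim_right0_mul (v u : R -> R) a hi M : a < hi -> (forall x, a < x < hi -> Rabs (v x) <= M) ->
  lim_right0 u a -> lim_right0 (fun x => v x * u x) a.
Proof.
  intros Hlo Hv Hu e He.
  set (M' := Rabs M + 1).
  assert (HM' : 0 < M') by (unfold M'; pose proof (Rabs_pos M); lra).
  destruct (Hu (e / M')) as [d [Hd H]]. apply Rdiv_lt_0_compat; lra.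
  exists (Rmin d (hi - a)). split. apply Rmin_case; lra.
  intros x Hx. assert (Rmin d (hi - a) <= d) by apply Rmin_l. assert (Rmin d (hi - a) <= hi - a) by apply Rmin_r.
  specialize (H x ltac:(lra)). specialize (Hv x ltac:(lra)).
  rewrite Rabs_mult.
  assert (Rabs (v x) <= M') by (unfold M'; pose proof (Rle_abs M); lra).
  assert (Rabs (u x) * M' < e) by (apply (Rmult_lt_compat_r M') in H; [|lra]; unfold Rdiv in H; rewrite Rmult_assoc, Rinv_l in H by lra; lra).
  pose proof (Rabs_pos (u x)). pose proof (Rabs_pos (v x)). nra.
Qed.

Lemma bounded_of_deriv (v dv : R -> R) lo hi Kb :
  lo < hi -> (forall x, lo < x < hi -> is_derive v x (dv x)) ->
  (forall x, lo < x < hi -> Rabs (dv x) <= Kb) ->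
  exists M, forall x, lo < x < hi -> Rabs (v x) <= M.
Proof.
  intros Hlh Hd Hb. set (xm := (lo + hi) / 2).
  exists (Rabs (v xm) + Kb * (hi - lo)).
  intros x Hx.
  assert (HG : forall z, lo < z < hi -> is_derive (fun t => Kb * t) z Kb).
  { intros z Hz. eapply D_val. apply D_scal. apply D_id. ring. }
  destruct (Rle_or_lt x xm) as [H|H].
  - pose proof (compare_le v dv (fun t => Kb * t) (fun _ => Kb) lo hi Hd HG Hb x xm) as C.
    simpl in C. assert (C' : Rabs (v xm - v x) <= Kb * xm - Kb * x) by (apply C; unfold xm in *; lra).
    assert (0 <= Kb) by (specialize (Hb x Hx); pose proof (Rabs_pos (dv x)); lra).
    pose proof (Rabs_triang_inv (v xm) (v x)). rewrite Rabs_minus_sym in C'.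
    pose proof (Rabs_triang_inv (v x) (v xm)).
    assert (Kb * xm - Kb * x <= Kb * (hi - lo)) by (unfold xm in *; nra). lra.
  - pose proof (compare_le v dv (fun t => Kb * t) (fun _ => Kb) lo hi Hd HG Hb xm x) as C.
    simpl in C. assert (C' : Rabs (v x - v xm) <= Kb * x - Kb * xm) by (apply C; unfold xm in *; lra).
    assert (0 <= Kb) by (specialize (Hb x Hx); pose proof (Rabs_pos (dv x)); lra).
    pose proof (Rabs_triang_inv (v x) (v xm)).
    assert (Kb * x - Kb * xm <= Kb * (hi - lo)) by (unfold xm in *; nra). lra.
Qed.

Lemma lim_left0_ext f g a : (forall x, f x = g x) -> lim_left0 f a -> lim_left0 g a.
Proof. intros E H e He. destruct (H e He) as [d [Hd H']]. exists d; split; auto. intros; rewrite <- E; auto. Qed.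
Lemma lim_right0_ext f g a : (forall x, f x = g x) -> lim_right0 f a -> lim_right0 g a.
Proof. intros E H e He. destruct (H e He) as [d [Hd H']]. exists d; split; auto. intros; rewrite <- E; auto. Qed.

Lemma abs_le_sq v M : v ^ 2 <= M -> Rabs v <= 1 + M.
Proof. intros H. apply Rabs_le. split; nra. Qed.

Lemma const_of_zero_deriv (P dP : R -> R) lo hi :
  (forall x, lo < x < hi -> is_derive P x (dP x)) ->
  (forall x, lo < x < hi -> dP x = 0) ->
  forall x y, lo < x < hi -> lo < y < hi -> P x = P y.
Proof.
  intros Hd H0 x y Hx Hy.
  assert (HG : forall z, lo < z < hi -> is_derive (fun _ => 0) z 0) by (intros; apply D_const).
  assert (Hb : forall z, lo < z < hi -> Rabs (dP z) <= 0) by (intros z Hz; rewrite H0 by auto; rewrite Rabs_R0; lra).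
  pose proof (compare_le P dP (fun _ => 0) (fun _ => 0) lo hi Hd HG Hb) as C. simpl in C.
  destruct (Rle_or_lt x y) as [H|H].
  - specialize (C x y ltac:(lra) H ltac:(lra)). pose proof (Rabs_pos (P y - P x)).
    assert (Rabs (P y - P x) = 0) by lra. apply Rabs_eq_0 in H2. lra.
  - specialize (C y x ltac:(lra) ltac:(lra) ltac:(lra)). pose proof (Rabs_pos (P x - P y)).
    assert (Rabs (P x - P y) = 0) by lra. apply Rabs_eq_0 in H2. lra.
Qed.

Lemma lin_bound a b x y M : Rabs x <= M -> Rabs y <= M -> Rabs (a * x + b * y) <= Rabs a * M + Rabs b * M.
Proof.
  intros Hx Hy. eapply Rle_trans. apply Rabs_triang. rewrite !Rabs_mult.
  pose proof (Rabs_pos a); pose proof (Rabs_pos b).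
  apply Rplus_le_compat; apply Rmult_le_compat_l; auto.
Qed.

Lemma D_refl (f : R -> R) (x df : R) : is_derive f (- x) df -> is_derive (fun t => f (- t)) x (- df).
Proof.
  intros H. eapply D_val. apply (is_derive_comp f Ropp x df (-1)). exact H.
  eapply D_val. apply (is_derive_opp (fun t : R => t)). apply D_id. simpl. reflexivity. simpl.
  change (-1 * df = - df). ring.
Qed.

Lemma dv_bound q Q c d s t : 0 <= q <= Q -> Rabs s <= 1 -> Rabs t <= 1 ->
  Rabs (q * (c * s + d * t)) <= Q * (Rabs c + Rabs d).
Proof.
  intros Hq Hs Ht. rewrite Rabs_mult. rewrite (Rabs_pos_eq q) by lra.
  assert (Rabs (c * s + d * t) <= Rabs c + Rabs d).
  { eapply Rle_trans. apply Rabs_triang. rewrite !Rabs_mult.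
    pose proof (Rabs_pos c); pose proof (Rabs_pos d); pose proof (Rabs_pos s); pose proof (Rabs_pos t). nra. }
  pose proof (Rabs_pos (c * s + d * t)). nra.
Qed.

Lemma D_opp (f : R -> R) (x df : R) : is_derive f x df -> is_derive (fun t => - f t) x (- df).
Proof. intros H. apply (is_derive_opp f x df H). Qed.


Lemma core (x0 eps c b alpha beta : R) (P1 P2 dP1 dP2 F1 F2 dF1 dF2 : R -> R) :
  0 < x0 <= 1 -> 0 <= eps -> 0 <= alpha -> 0 < alpha * c + beta * b ->
  (forall x, -x0 < x < x0 -> is_derive P1 x (dP1 x)) ->
  (forall x, -x0 < x < x0 -> is_derive P2 x (dP2 x)) ->
  (forall x, -x0 < x < x0 -> is_derive (fun y => (1 - y^2) * dP1 y) x (F1 x)) ->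
  (forall x, -x0 < x < x0 -> is_derive (fun y => (1 - y^2) * dP2 y) x (F2 x)) ->
  (forall x, -x0 < x < x0 -> is_derive F1 x (dF1 x)) ->
  (forall x, -x0 < x < x0 -> is_derive F2 x (dF2 x)) ->
  (forall x, -x0 < x < x0 -> dF1 x + eps / (1 - x^2) * F1 x = c * dP1 x - b * dP2 x) ->
  (forall x, -x0 < x < x0 -> dF2 x + eps / (1 - x^2) * F2 x = c * dP2 x + b * dP1 x) ->
  lim_left0 (fun y => (1 - y^2) * dP1 y) x0 -> lim_left0 (fun y => (1 - y^2) * dP2 y) x0 ->
  lim_right0 (fun y => (1 - y^2) * dP1 y) (-x0) -> lim_right0 (fun y => (1 - y^2) * dP2 y) (-x0) ->
  forall x, -x0 < x < x0 -> P1 x = P1 0 /\ P2 x = P2 0.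
Proof.
  intros Hx0 Heps Hal Hk HP1 HP2 Hu1 Hu2 HF1 HF2 Eq1 Eq2 Hl1 Hl2 Hr1 Hr2.
  set (u1 := fun y => (1 - y^2) * dP1 y). set (u2 := fun y => (1 - y^2) * dP2 y).
  fold u1 in Hu1, Hl1, Hr1. fold u2 in Hu2, Hl2, Hr2.
  set (p := pw eps).
  set (v1 := fun y => p y * F1 y). set (v2 := fun y => p y * F2 y).
  assert (HI : forall x, -x0 < x < x0 -> -1 < x < 1) by (intros; lra).
  assert (Hpp : forall x, 0 < p x) by (intros; apply pw_pos).
  assert (Hden : forall x, -x0 < x < x0 -> 0 < 1 - x ^ 2) by (intros x Hx; pose proof (HI x Hx); nra).
  assert (Hdu1 : forall x, -x0 < x < x0 -> is_derive u1 x (v1 x / p x)).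
  { intros x Hx. eapply D_val. apply Hu1; auto. unfold v1. field. pose proof (Hpp x); lra. }
  assert (Hdu2 : forall x, -x0 < x < x0 -> is_derive u2 x (v2 x / p x)).
  { intros x Hx. eapply D_val. apply Hu2; auto. unfold v2. field. pose proof (Hpp x); lra. }
  assert (Hdv1 : forall x, -x0 < x < x0 -> is_derive v1 x (p x / (1 - x^2) * (c * u1 x - b * u2 x))).
  { intros x Hx. eapply D_val. apply D_mult. apply pw_deriv; auto. apply HF1; auto.
    assert (E : dF1 x = c * dP1 x - b * dP2 x - eps / (1 - x^2) * F1 x) by (rewrite <- Eq1 by auto; ring).
    rewrite E. unfold u1, u2. fold p. field. pose proof (Hden x Hx); lra. }
  assert (Hdv2 : forall x, -x0 < x < x0 -> is_derive v2 x (p x / (1 - x^2) * (c * u2 x + b * u1 x))).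
  { intros x Hx. eapply D_val. apply D_mult. apply pw_deriv; auto. apply HF2; auto.
    assert (E : dF2 x = c * dP2 x + b * dP1 x - eps / (1 - x^2) * F2 x) by (rewrite <- Eq2 by auto; ring).
    rewrite E. unfold u1, u2. fold p. field. pose proof (Hden x Hx); lra. }
  assert (Hbd1 : forall x Q, -x0 < x < x0 -> p x / (1 - x^2) <= Q -> Rabs (u1 x) <= 1 -> Rabs (u2 x) <= 1 ->
      Rabs (p x / (1 - x^2) * (c * u1 x - b * u2 x)) <= Q * (Rabs c + Rabs b)).
  { intros x Q Hx HQ H1 H2. rewrite <- (Rabs_Ropp b).
    replace (c * u1 x - b * u2 x) with (c * u1 x + - b * u2 x) by ring.
    apply dv_bound; auto. split; auto. apply Rlt_le, Rdiv_lt_0_compat; auto. }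
  assert (Hbd2 : forall x Q, -x0 < x < x0 -> p x / (1 - x^2) <= Q -> Rabs (u1 x) <= 1 -> Rabs (u2 x) <= 1 ->
      Rabs (p x / (1 - x^2) * (c * u2 x + b * u1 x)) <= Q * (Rabs c + Rabs b)).
  { intros x Q Hx HQ H1 H2. apply dv_bound; auto. split; auto. apply Rlt_le, Rdiv_lt_0_compat; auto. }
  assert (RB : exists a M, -x0 < a < x0 /\ forall x, a < x < x0 -> Rabs (v1 x) <= M /\ Rabs (v2 x) <= M).
  { destruct (Rlt_or_le x0 1) as [Hx1|Hx1].
    - destruct (Hl1 1) as [d1 [Hd1 H1]]; [lra|]. destruct (Hl2 1) as [d2 [Hd2 H2]]; [lra|].
      set (a := Rmax (x0 - Rmin d1 d2) 0).
      assert (Ha : 0 <= a < x0 /\ x0 - d1 <= a /\ x0 - d2 <= a).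
      { unfold a. pose proof (Rmin_l d1 d2). pose proof (Rmin_r d1 d2).
        assert (0 < Rmin d1 d2) by (apply Rmin_case; lra). unfold Rmax; destruct Rle_dec; lra. }
      set (Q := pw eps x0 / (1 - x0 ^ 2)).
      assert (HQ : forall x, a < x < x0 -> p x / (1 - x ^ 2) <= Q).
      { intros x Hx. unfold Q, p. assert (pw eps x <= pw eps x0) by (apply pw_mono; lra).
        pose proof (pw_pos eps x). assert (x ^ 2 <= x0 ^ 2) by nra.
        unfold Rdiv. apply Rmult_le_compat; try lra. apply Rlt_le, Rinv_0_lt_compat; nra.
        apply Rinv_le_contravar; nra. }
      assert (Hu : forall x, a < x < x0 -> Rabs (u1 x) <= 1 /\ Rabs (u2 x) <= 1).
      { intros x Hx. split; [apply Rlt_le, H1|apply Rlt_le, H2]; lra. }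
      destruct (bounded_of_deriv v1 (fun t => p t / (1 - t^2) * (c * u1 t - b * u2 t)) a x0 (Q * (Rabs c + Rabs b))) as [M1 HM1]; try lra.
      { intros x Hx. apply Hdv1; lra. }
      { intros x Hx. destruct (Hu x Hx). apply Hbd1; auto; lra. }
      destruct (bounded_of_deriv v2 (fun t => p t / (1 - t^2) * (c * u2 t + b * u1 t)) a x0 (Q * (Rabs c + Rabs b))) as [M2 HM2]; try lra.
      { intros x Hx. apply Hdv2; lra. }
      { intros x Hx. destruct (Hu x Hx). apply Hbd2; auto; lra. }
      exists a, (Rmax M1 M2). split; [lra|]. intros x Hx.
      split; eapply Rle_trans; [apply HM1; auto| apply Rmax_l | apply HM2; auto | apply Rmax_r].
    - assert (E1 : x0 = 1) by lra. subst x0.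
      destruct (Rlt_or_le 0 eps) as [He|He].
      + destruct (Epos eps c b 0 p u1 u2 v1 v2) as [a' [M [Ha' HM]]]; auto; try lra.
        * intros x Hx. apply pw_deriv. lra.
        * intros x Hx; apply Hdu1; lra.
        * intros x Hx; apply Hdu2; lra.
        * intros x Hx; apply Hdv1; lra.
        * intros x Hx; apply Hdv2; lra.
        * exists a', (1 + M). split; [lra|]. intros x Hx. pose proof (HM x Hx).
          split; apply abs_le_sq; nra.
      + assert (E2 : eps = 0) by lra. 
        assert (Hp1 : forall x, p x = 1) by (intros; unfold p; rewrite E2; apply pw_zero).
        destruct (E0 c b 0 u1 u2 v1 v2) as [a' [M [Ha' HM]]]; auto; try lra.
        * intros x Hx. eapply D_val. apply Hdu1; lra. rewrite Hp1; field.
        * intros x Hx. eapply D_val. apply Hdu2; lra. rewrite Hp1; field.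
        * intros x Hx. eapply D_val. apply Hdv1; lra. rewrite Hp1; field. nra.
        * intros x Hx. eapply D_val. apply Hdv2; lra. rewrite Hp1; field. nra.
        * exists a', (1 + M). split; [lra|]. intros x Hx. pose proof (HM x Hx).
          split; apply abs_le_sq; nra. }
  assert (LB : exists a M, -x0 < a < x0 /\ forall x, -x0 < x < a -> Rabs (v1 x) <= M /\ Rabs (v2 x) <= M).
  { destruct (Rlt_or_le x0 1) as [Hx1|Hx1].
    - destruct (Hr1 1) as [d1 [Hd1 H1]]; [lra|]. destruct (Hr2 1) as [d2 [Hd2 H2]]; [lra|].
      set (a := Rmin (- x0 + Rmin d1 d2) 0).
      assert (Ha : - x0 < a <= 0 /\ a <= - x0 + d1 /\ a <= - x0 + d2).
      { unfold a. pose proof (Rmin_l d1 d2). pose proof (Rmin_r d1 d2).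
        assert (0 < Rmin d1 d2) by (apply Rmin_case; lra). set (m := Rmin d1 d2) in *. unfold Rmin; destruct Rle_dec; lra. }
      set (Q := pw eps x0 / (1 - x0 ^ 2)).
      assert (HQ : forall x, - x0 < x < a -> p x / (1 - x ^ 2) <= Q).
      { intros x Hx. unfold Q, p. assert (pw eps x <= pw eps x0) by (apply pw_mono; lra).
        pose proof (pw_pos eps x). assert (x ^ 2 <= x0 ^ 2) by nra.
        unfold Rdiv. apply Rmult_le_compat; try lra. apply Rlt_le, Rinv_0_lt_compat; nra.
        apply Rinv_le_contravar; nra. }
      assert (Hu : forall x, - x0 < x < a -> Rabs (u1 x) <= 1 /\ Rabs (u2 x) <= 1).
      { intros x Hx. split; [apply Rlt_le, H1|apply Rlt_le, H2]; lra. }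
      destruct (bounded_of_deriv v1 (fun t => p t / (1 - t^2) * (c * u1 t - b * u2 t)) (- x0) a (Q * (Rabs c + Rabs b))) as [M1 HM1]; try lra.
      { intros x Hx. apply Hdv1; lra. }
      { intros x Hx. destruct (Hu x Hx). apply Hbd1; auto; lra. }
      destruct (bounded_of_deriv v2 (fun t => p t / (1 - t^2) * (c * u2 t + b * u1 t)) (- x0) a (Q * (Rabs c + Rabs b))) as [M2 HM2]; try lra.
      { intros x Hx. apply Hdv2; lra. }
      { intros x Hx. destruct (Hu x Hx). apply Hbd2; auto; lra. }
      exists a, (Rmax M1 M2). split; [lra|]. intros x Hx.
      split; eapply Rle_trans; [apply HM1; auto| apply Rmax_l | apply HM2; auto | apply Rmax_r].
    - assert (E1 : x0 = 1) by lra. subst x0.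
      destruct (Rlt_or_le 0 eps) as [He|He].
      + destruct (Hr1 1) as [d1 [Hd1 H1]]; [lra|]. destruct (Hr2 1) as [d2 [Hd2 H2]]; [lra|].
        set (a0 := Rmin (- 1 + Rmin d1 d2) 0).
        assert (Ha : - 1 < a0 <= 0 /\ a0 <= - 1 + d1 /\ a0 <= - 1 + d2).
        { unfold a0. pose proof (Rmin_l d1 d2). pose proof (Rmin_r d1 d2).
          assert (0 < Rmin d1 d2) by (apply Rmin_case; lra). set (m := Rmin d1 d2) in *. unfold Rmin; destruct Rle_dec; lra. }
        set (xm := (a0 - 1) / 2).
        set (Kc := (Rabs c + Rabs b) / eps).
        assert (HKc : 0 <= Kc) by (unfold Kc; apply Rmult_le_pos; [pose proof (Rabs_pos c); pose proof (Rabs_pos b); lra|apply Rlt_le, Rinv_0_lt_compat; lra]).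
        assert (HG : forall x, -1 < x < a0 -> is_derive (fun t => Kc * p t) x (Kc * (p x * eps / (1 - x ^ 2)))).
        { intros x Hx. apply D_scal. apply pw_deriv. lra. }
        assert (HGb : forall x, -1 < x < a0 -> p x / (1 - x^2) * (Rabs c + Rabs b) = Kc * (p x * eps / (1 - x ^ 2))).
        { intros x Hx. unfold Kc. field. repeat split; nra. }
        assert (Hu : forall x, - 1 < x < a0 -> Rabs (u1 x) <= 1 /\ Rabs (u2 x) <= 1).
        { intros x Hx. split; [apply Rlt_le, H1|apply Rlt_le, H2]; lra. }
        assert (C1 : forall x, -1 < x <= xm -> Rabs (v1 x) <= Rabs (v1 xm) + Kc * p xm).
        { intros x Hx.
          pose proof (compare_le v1 (fun t => p t / (1 - t^2) * (c * u1 t - b * u2 t)) (fun t => Kc * p t)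
                     (fun t => Kc * (p t * eps / (1 - t ^ 2))) (-1) a0) as CC. simpl in CC.
          assert (CC' : Rabs (v1 xm - v1 x) <= Kc * p xm - Kc * p x).
          { apply CC;
            [ intros z Hz; apply Hdv1; lra
            | intros z Hz; apply HG; lra
            | intros z Hz; rewrite <- HGb by auto; destruct (Hu z Hz); apply Hbd1; auto; lra
            | unfold xm in *; lra | unfold xm in *; lra | unfold xm in *; lra ]. }
          pose proof (pw_pos eps x). fold p in H. assert (0 <= Kc * p x) by nra.
          pose proof (Rabs_triang_inv (v1 x) (v1 xm)). rewrite Rabs_minus_sym in CC'. lra. }
        assert (C2 : forall x, -1 < x <= xm -> Rabs (v2 x) <= Rabs (v2 xm) + Kc * p xm).
        { intros x Hx.
          pose proof (compare_le v2 (fun t => p t / (1 - t^2) * (c * u2 t + b * u1 t)) (fun t => Kc * p t)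
                     (fun t => Kc * (p t * eps / (1 - t ^ 2))) (-1) a0) as CC. simpl in CC.
          assert (CC' : Rabs (v2 xm - v2 x) <= Kc * p xm - Kc * p x).
          { apply CC;
            [ intros z Hz; apply Hdv2; lra
            | intros z Hz; apply HG; lra
            | intros z Hz; rewrite <- HGb by auto; destruct (Hu z Hz); apply Hbd2; auto; lra
            | unfold xm in *; lra | unfold xm in *; lra | unfold xm in *; lra ]. }
          pose proof (pw_pos eps x). fold p in H. assert (0 <= Kc * p x) by nra.
          pose proof (Rabs_triang_inv (v2 x) (v2 xm)). rewrite Rabs_minus_sym in CC'. lra. }
        exists xm, (Rmax (Rabs (v1 xm) + Kc * p xm) (Rabs (v2 xm) + Kc * p xm)).
        split; [unfold xm; lra|]. intros x Hx. split.
        * eapply Rle_trans; [apply C1; lra| apply Rmax_l].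
        * eapply Rle_trans; [apply C2; lra| apply Rmax_r].
      + assert (E2 : eps = 0) by lra.
        assert (Hp1 : forall x, p x = 1) by (intros; unfold p; rewrite E2; apply pw_zero).
        destruct (E0 c b 0 (fun t => u1 (- t)) (fun t => u2 (- t)) (fun t => - v1 (- t)) (fun t => - v2 (- t)))
          as [a' [M [Ha' HM]]]; try lra.
        * intros x Hx. eapply D_val. apply D_refl. apply Hdu1; lra. rewrite Hp1; field.
        * intros x Hx. eapply D_val. apply D_refl. apply Hdu2; lra. rewrite Hp1; field.
        * intros x Hx. eapply D_val. apply (D_opp (fun t => v1 (- t))). apply D_refl. apply Hdv1; lra.
          rewrite Hp1. simpl. field. nra.
        * intros x Hx. eapply D_val. apply (D_opp (fun t => v2 (- t))). apply D_refl. apply Hdv2; lra.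
          rewrite Hp1. simpl. field. nra.
        * intros e He'. destruct (Hr1 e He') as [d [Hd H]]. exists d; split; auto.
          intros x Hx. apply H. lra.
        * intros e He'. destruct (Hr2 e He') as [d [Hd H]]. exists d; split; auto.
          intros x Hx. apply H. lra.
        * exists (- a'), (1 + M). split; [lra|]. intros x Hx. pose proof (HM (- x) ltac:(lra)) as HMx.
          rewrite Ropp_involutive in HMx.
          split; apply abs_le_sq; nra. }
  set (T := fun x => alpha * (v1 x * u1 x + v2 x * u2 x) + beta * (v2 x * u1 x - v1 x * u2 x)).
  set (k := alpha * c + beta * b).
  set (dT := fun x => k * (p x / (1 - x^2)) * (u1 x ^ 2 + u2 x ^ 2) + alpha * (v1 x ^ 2 + v2 x ^ 2) / p x).
  assert (HdT : forall x, -x0 < x < x0 -> is_derive T x (dT x)).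
  { intros x Hx. unfold T. eapply D_val.
    - apply D_plus; apply D_scal; [apply D_plus|apply D_minus]; apply D_mult; auto.
    - unfold dT, k, v1, v2. simpl. field. split; [pose proof (Hpp x); lra | pose proof (Hden x Hx); lra]. }
  assert (HdTpos : forall x, -x0 < x < x0 -> 0 <= dT x).
  { intros x Hx. unfold dT. pose proof (Hpp x). pose proof (Hden x Hx).
    assert (0 < p x / (1 - x ^ 2)) by (apply Rdiv_lt_0_compat; lra).
    assert (0 <= u1 x ^ 2 + u2 x ^ 2) by nra.
    assert (0 <= alpha * (v1 x ^ 2 + v2 x ^ 2) / p x).
    { apply Rmult_le_pos; [|apply Rlt_le, Rinv_0_lt_compat; lra]. apply Rmult_le_pos; nra. }
    fold k in Hk. assert (0 <= k * (p x / (1 - x ^ 2)) * (u1 x ^ 2 + u2 x ^ 2)).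
    { apply Rmult_le_pos; auto. apply Rmult_le_pos; lra. }
    lra. }
  assert (HTe : forall x, T x = (alpha * v1 x + beta * v2 x) * u1 x + (alpha * v2 x + (- beta) * v1 x) * u2 x).
  { intros; unfold T; ring. }
  assert (HTl : lim_left0 T x0).
  { destruct RB as [a [M [Ha HM]]].
    apply (lim_left0_ext (fun x => (alpha * v1 x + beta * v2 x) * u1 x + (alpha * v2 x + (- beta) * v1 x) * u2 x)).
    { intros; rewrite HTe; auto. }
    apply lim_left0_plus.
    - apply (lim_left0_mul _ _ x0 a (Rabs alpha * M + Rabs beta * M)); try lra; auto.
      intros x Hx. destruct (HM x Hx). apply lin_bound; auto.
    - apply (lim_left0_mul _ _ x0 a (Rabs alpha * M + Rabs (- beta) * M)); try lra; auto.
      intros x Hx. destruct (HM x Hx). apply lin_bound; auto. }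
  assert (HTr : lim_right0 T (- x0)).
  { destruct LB as [a [M [Ha HM]]].
    apply (lim_right0_ext (fun x => (alpha * v1 x + beta * v2 x) * u1 x + (alpha * v2 x + (- beta) * v1 x) * u2 x)).
    { intros; rewrite HTe; auto. }
    apply lim_right0_plus.
    - apply (lim_right0_mul _ _ (- x0) a (Rabs alpha * M + Rabs beta * M)); try lra; auto.
      intros x Hx. destruct (HM x Hx). apply lin_bound; auto.
    - apply (lim_right0_mul _ _ (- x0) a (Rabs alpha * M + Rabs (- beta) * M)); try lra; auto.
      intros x Hx. destruct (HM x Hx). apply lin_bound; auto. }
  assert (HT0 : forall x, -x0 < x < x0 -> T x = 0).
  { apply (mono_zero T dT); auto; lra. }
  assert (Hh : forall x, -x0 < x < x0 -> u1 x = 0 /\ u2 x = 0).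
  { intros x Hx. pose proof (deriv_zero_of_zero T (-x0) x0 x (dT x) Hx HT0 (HdT x Hx)) as Z.
    unfold dT in Z. pose proof (Hpp x). pose proof (Hden x Hx).
    assert (Hq : 0 < p x / (1 - x ^ 2)) by (apply Rdiv_lt_0_compat; lra).
    assert (0 <= alpha * (v1 x ^ 2 + v2 x ^ 2) / p x).
    { apply Rmult_le_pos; [|apply Rlt_le, Rinv_0_lt_compat; lra]. apply Rmult_le_pos; nra. }
    fold k in Hk.
    assert (0 <= u1 x ^ 2 + u2 x ^ 2) by nra.
    assert (0 <= k * (p x / (1 - x ^ 2)) * (u1 x ^ 2 + u2 x ^ 2)).
    { apply Rmult_le_pos; auto. apply Rmult_le_pos; lra. }
    assert (k * (p x / (1 - x ^ 2)) * (u1 x ^ 2 + u2 x ^ 2) = 0) by lra.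
    assert (Hkq : 0 < k * (p x / (1 - x ^ 2))) by (apply Rmult_lt_0_compat; lra).
    assert (u1 x ^ 2 + u2 x ^ 2 = 0).
    { apply (Rmult_eq_reg_l (k * (p x / (1 - x ^ 2)))); lra. }
    split; nra. }
  assert (HdP : forall x, -x0 < x < x0 -> dP1 x = 0 /\ dP2 x = 0).
  { intros x Hx. destruct (Hh x Hx) as [H1 H2]. unfold u1, u2 in H1, H2. pose proof (Hden x Hx).
    split; [apply (Rmult_eq_reg_l (1 - x^2)) | apply (Rmult_eq_reg_l (1 - x^2))]; lra. }
  intros x Hx. split.
  - apply (const_of_zero_deriv P1 dP1 (-x0) x0); auto; try lra. intros z Hz; apply HdP; auto.
  - apply (const_of_zero_deriv P2 dP2 (-x0) x0); auto; try lra. intros z Hz; apply HdP; auto.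
Qed.


Theorem theorem7 (x0 eps : R) (mu : C) :
  0 < x0 <= 1 -> 0 <= eps ->
  is_eigenvalue x0 eps mu -> mu <> RtoC 0 ->
  Im mu = 0 /\ Re mu < 0.
Proof.
  intros Hx0 Heps [Psi [dPsi [Phi [dPhi [Hd [Hint [Hbc0 [Hbc1 Hnc]]]]]]]] Hmu.
  destruct mu as [c b]. unfold Im, Re; simpl.
  set (P1 := fun y => fst (Psi y)). set (P2 := fun y => snd (Psi y)).
  set (dP1 := fun y => fst (dPsi y)). set (dP2 := fun y => snd (dPsi y)).
  set (F1 := fun y => fst (Phi y)). set (F2 := fun y => snd (Phi y)).
  set (dF1 := fun y => fst (dPhi y)). set (dF2 := fun y => snd (dPhi y)).
  assert (HP1 : forall x, -x0 < x < x0 -> is_derive P1 x (dP1 x)).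
  { intros x Hx. apply D_fst. apply (Hd x Hx). }
  assert (HP2 : forall x, -x0 < x < x0 -> is_derive P2 x (dP2 x)).
  { intros x Hx. apply D_snd. apply (Hd x Hx). }
  assert (Hu1 : forall x, -x0 < x < x0 -> is_derive (fun y => (1 - y^2) * dP1 y) x (F1 x)).
  { intros x Hx. apply (D_ext (fun y => fst ((RtoC (1 - y ^ 2) * dPsi y)%C))).
    - intros t. unfold dP1, Cmult, RtoC. simpl. ring.
    - apply D_fst. apply (Hd x Hx). }
  assert (Hu2 : forall x, -x0 < x < x0 -> is_derive (fun y => (1 - y^2) * dP2 y) x (F2 x)).
  { intros x Hx. apply (D_ext (fun y => snd ((RtoC (1 - y ^ 2) * dPsi y)%C))).
    - intros t. unfold dP2, Cmult, RtoC. simpl. ring.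
    - apply D_snd. apply (Hd x Hx). }
  assert (HF1 : forall x, -x0 < x < x0 -> is_derive F1 x (dF1 x)).
  { intros x Hx. apply D_fst. apply (Hd x Hx). }
  assert (HF2 : forall x, -x0 < x < x0 -> is_derive F2 x (dF2 x)).
  { intros x Hx. apply D_snd. apply (Hd x Hx). }
  assert (Eq1 : forall x, -x0 < x < x0 -> dF1 x + eps / (1 - x^2) * F1 x = c * dP1 x - b * dP2 x).
  { intros x Hx. destruct (Hd x Hx) as [_ [_ [_ E]]]. apply (f_equal fst) in E.
    unfold Cplus, Cmult, RtoC in E. simpl in E. unfold dF1, F1, dP1, dP2. simpl. rewrite <- E. ring. }
  assert (Eq2 : forall x, -x0 < x < x0 -> dF2 x + eps / (1 - x^2) * F2 x = c * dP2 x + b * dP1 x).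
  { intros x Hx. destruct (Hd x Hx) as [_ [_ [_ E]]]. apply (f_equal snd) in E.
    unfold Cplus, Cmult, RtoC in E. simpl in E. unfold dF2, F2, dP1, dP2. simpl. rewrite <- E. ring. }
  assert (Hlims : lim_left0 (fun y => (1 - y^2) * dP1 y) x0 /\ lim_left0 (fun y => (1 - y^2) * dP2 y) x0 /\
                  lim_right0 (fun y => (1 - y^2) * dP1 y) (-x0) /\ lim_right0 (fun y => (1 - y^2) * dP2 y) (-x0)).
  { destruct (Rlt_or_le x0 1) as [Hx1|Hx1].
    - destruct (Hbc0 Hx1) as [HL HR].
      destruct (lim_C_right dPsi (-x0) HL) as [L1 L2].
      destruct (lim_C_left dPsi x0 HR) as [R1 R2].
      assert (Hb1 : forall x, -x0 < x < x0 -> Rabs (1 - x ^ 2) <= 1).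
      { intros x Hx. apply Rabs_le. split; nra. }
      repeat split.
      + apply (lim_left0_mul _ _ x0 (-x0) 1); auto; lra.
      + apply (lim_left0_mul _ _ x0 (-x0) 1); auto; lra.
      + apply (lim_right0_mul _ _ (-x0) x0 1); auto; lra.
      + apply (lim_right0_mul _ _ (-x0) x0 1); auto; lra.
    - assert (E1 : x0 = 1) by lra.
      destruct (Hbc1 E1) as [HL HR]. rewrite E1.
      destruct (lim_C_right _ _ HL) as [L1 L2].
      destruct (lim_C_left _ _ HR) as [R1 R2].
      repeat split.
      + eapply lim_left0_ext; [|exact R1]. intros t; unfold dP1, Cmult, RtoC; simpl; ring.
      + eapply lim_left0_ext; [|exact R2]. intros t; unfold dP2, Cmult, RtoC; simpl; ring.
      + eapply lim_right0_ext; [|exact L1]. intros t; unfold dP1, Cmult, RtoC; simpl; ring.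
      + eapply lim_right0_ext; [|exact L2]. intros t; unfold dP2, Cmult, RtoC; simpl; ring. }
  destruct Hlims as [Hl1 [Hl2 [Hr1 Hr2]]].
  assert (Hcore : forall alpha beta, 0 <= alpha -> 0 < alpha * c + beta * b -> False).
  { intros alpha beta Ha Hk.
    pose proof (core x0 eps c b alpha beta P1 P2 dP1 dP2 F1 F2 dF1 dF2 Hx0 Heps Ha Hk
                  HP1 HP2 Hu1 Hu2 HF1 HF2 Eq1 Eq2 Hl1 Hl2 Hr1 Hr2) as Hc.
    apply Hnc. exists (Psi 0). intros x Hx. destruct (Hc x Hx) as [E1 E2].
    unfold P1, P2 in E1, E2. apply injective_projections; auto. }
  destruct (Req_dec b 0) as [Hb|Hb].
  - split; auto. destruct (Rlt_or_le c 0) as [Hc|Hc]; auto. exfalso.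
    destruct (Req_dec c 0) as [Hc0|Hc0].
    + apply Hmu. subst. reflexivity.
    + apply (Hcore 1 0); lra.
  - exfalso. apply (Hcore 0 b); [lra|]. assert (0 < b * b) by (apply Rsqr_pos_lt; auto). lra.
Qed.
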